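(* Let $N\in\mathbb{N}$, $0\le\mu<L<\infty$, and let $M$ be a method which, for coefficients $\{\alpha_{i,j}\}_{i=1,\dots,N;\,j=0,\dots,i-1}$, generates iterates satisfying $w_k-w_\star=(w_0-w_\star)(1-\frac{\mu}{L}\sum_{i=0}^{k-1}\alpha_{k,i})-\sum_{i=0}^{k-1}\frac{\alpha_{k,i}}{L}\nabla\tilde f(w_i)$, $k=1,\dots,N$, where $\tilde f(x)=f(x)-\frac\mu2\|x-w_\star\|^2$. For any $d\in\mathbb{N}$, $w_0\in\mathbb{R}^d$, $f\in\mathcal{F}_{\mu,L}(\mathbb{R}^d)$, $w_\star\in\arg\min_w f(w)$ and $w_N$ the output of $M$ on $f$ from $w_0$, it holds that $\|w_N-w_\star\|^2\le \mathrm{UB}_{\mu,L}(\{\alpha_{i,j}\})\,\|w_0-w_\star\|^2$, with $\mathrm{UB}_{\mu,L}$ as defined in the context.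
   Context: $\mathcal{F}_{\mu,L}(\mathbb{R}^d)$ denotes the set of proper closed convex functions $f:\mathbb{R}^d\to\mathbb{R}$ such that for all $x,y$: $f(x)\le f(y)+\langle\nabla f(y);x-y\rangle+\frac L2\|x-y\|^2$ and $f(x)\ge f(y)+\langle\nabla f(y);x-y\rangle+\frac\mu2\|x-y\|^2$. Let $e_i$ denote unit vectors; set $\mathbf{w}_0=e_1\in\mathbb{R}^{N+1}$, $\mathbf{g}_i=e_{i+2}\in\mathbb{R}^{N+1}$, $\mathbf{f}_i=e_{i+1}\in\mathbb{R}^N$ ($i=0,\dots,N-1$), and $\mathbf{w}_k=\mathbf{w}_0(1-\frac{\mu}{L}\sum_{i=0}^{k-1}\alpha_{k,i})-\sum_{i=0}^{k-1}\frac{\alpha_{k,i}}{L}\mathbf{g}_i$ for $k=1,\dots,N$. With scalars $\tau$, $\lambda_{i,i+1}$ ($i=0,\dots,N-2$), $\lambda_{\star,i}$ ($i=0,\dots,N-1$), $\lambda_{N-1,\star}$, define the symmetric matrix $S=\tau\mathbf{w}_0\mathbf{w}_0^\top-\mathbf{w}_N\mathbf{w}_N^\top+\frac{\lambda_{N-1,\star}}{2(L-\mu)}\mathbf{g}_{N-1}\mathbf{g}_{N-1}^\top+\sum_{i=0}^{N-1}\frac{\lambda_{\star,i}}{2}\big(-\mathbf{g}_i\mathbf{w}_i^\top-\mathbf{w}_i\mathbf{g}_i^\top+\frac{1}{L-\mu}\mathbf{g}_i\mathbf{g}_i^\top\big)+\sum_{i=0}^{N-2}\frac{\lambda_{i,i+1}}{2}\big(\mathbf{g}_{i+1}(\mathbf{w}_i-\mathbf{w}_{i+1})^\top+(\mathbf{w}_i-\mathbf{w}_{i+1})\mathbf{g}_{i+1}^\top+\frac{1}{L-\mu}(\mathbf{g}_i-\mathbf{g}_{i+1})(\mathbf{g}_i-\mathbf{g}_{i+1})^\top\big)$.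 $\mathrm{UB}_{\mu,L}(\{\alpha_{i,j}\})$ is the optimal value of: minimize $\tau$ over $\tau$ and all $\lambda$'s $\ge0$ subject to $S\succeq0$ and $\sum_{i=0}^{N-2}\lambda_{i,i+1}(\mathbf{f}_{i+1}-\mathbf{f}_i)+\sum_{i=0}^{N-1}\lambda_{\star,i}\mathbf{f}_i-\lambda_{N-1,\star}\mathbf{f}_{N-1}=0$. *)

(* Defs.v *)
From HB Require Import structures.
From mathcomp Require Import all_boot all_order all_algebra.
From mathcomp Require Import all_classical all_reals all_analysis.
Set Implicit Arguments. Unset Strict Implicit. Unset Printing Implicit Defensive.
Import Order.TTheory GRing.Theory Num.Theory.
Import numFieldNormedType.Exports.
Local Open Scope classical_set_scope.
Local Open Scope ring_scope.

Definition dotp (R : realType) (d : nat) (u v : 'rV[R]_d) : R :=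
  \sum_(i < d) u 0 i * v 0 i.

Definition sqnorm (R : realType) (d : nat) (u : 'rV[R]_d) : R := dotp u u.

Definition in_FmuL (R : realType) (d : nat) (mu L : R)
    (f : 'rV[R]_d -> R) (g : 'rV[R]_d -> 'rV[R]_d) : Prop :=
  (forall x, differentiable f x /\ forall h, 'd f x h = dotp (g x) h) /\
  (forall x y, f x <= f y + dotp (g y) (x - y) + L / 2 * sqnorm (x - y)) /\
  (forall x y, f y + dotp (g y) (x - y) + mu / 2 * sqnorm (x - y) <= f x).

(* 0-based unit vector e_(j+1) of R^n (column vector); zero if j >= n *)
Definition ev (R : realType) (n j : nat) : 'cV[R]_n :=
  \col_(r < n) (if (r : nat) == j then 1 else 0).

Definition outer (R : realType) (n : nat) (u v : 'cV[R]_n) : 'M[R]_n :=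
  u *m v^T.

Definition bw0 (R : realType) (N : nat) : 'cV[R]_(N.+1) := ev R N.+1 0.
Definition bg (R : realType) (N i : nat) : 'cV[R]_(N.+1) := ev R N.+1 i.+1.
Definition bf (R : realType) (N i : nat) : 'cV[R]_N := ev R N i.

(* bold w_k (for k = 0 this is w_0 as the sums are empty) *)
Definition bw (R : realType) (N : nat) (mu L : R) (alpha : nat -> nat -> R)
    (k : nat) : 'cV[R]_(N.+1) :=
  (1 - mu / L * \sum_(i < k) alpha k i) *: bw0 R N
  - \sum_(i < k) (alpha k i / L) *: bg R N i.

Definition Smat (R : realType) (N : nat) (mu L : R) (alpha : nat -> nat -> R)
    (tau : R) (lnext lstar : nat -> R) (llast : R) : 'M[R]_(N.+1) :=
  let w := bw N mu L alpha in
  let g := bg R N in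
  tau *: outer (bw0 R N) (bw0 R N) - outer (w N) (w N)
  + (llast / (2 * (L - mu))) *: outer (g N.-1) (g N.-1)
  + \sum_(i < N) (lstar i / 2) *:
      (- outer (g i) (w i) - outer (w i) (g i)
       + (L - mu)^-1 *: outer (g i) (g i))
  + \sum_(i < N.-1) (lnext i / 2) *:
      (outer (g i.+1) (w i - w i.+1) + outer (w i - w i.+1) (g i.+1)
       + (L - mu)^-1 *: outer (g i - g i.+1) (g i - g i.+1)).

Definition psd (R : realType) (n : nat) (A : 'M[R]_n) : Prop :=
  forall x : 'cV[R]_n, 0 <= (x^T *m A *m x) 0 0.

(* tau is feasible: there are multipliers lambda >= 0 with S ⪰ 0 and the
   linear constraint; lnext i = lambda_{i,i+1}, lstar i = lambda_{*,i},
   llast = lambda_{N-1,*}. *)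
Definition UB_feasible (R : realType) (N : nat) (mu L : R)
    (alpha : nat -> nat -> R) (tau : R) : Prop :=
  exists (lnext lstar : nat -> R) (llast : R),
    (forall i, (i < N.-1)%N -> 0 <= lnext i) /\
    (forall i, (i < N)%N -> 0 <= lstar i) /\
    0 <= llast /\
    psd (Smat N mu L alpha tau lnext lstar llast) /\
    \sum_(i < N.-1) lnext i *: (bf R N i.+1 - bf R N i)
      + \sum_(i < N) lstar i *: bf R N i - llast *: bf R N N.-1 = 0.

(* optimal value of the SDP (infimum of feasible tau; +oo if infeasible) *)
Definition UB (R : realType) (N : nat) (mu L : R) (alpha : nat -> nat -> R)
    : \bar R :=
  ereal_inf [set t%:E | t in UB_feasible N mu L alpha].

(* Main.v *)
Require Import Defs.
From HB Require Import structures.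
From mathcomp Require Import all_boot all_order all_algebra.
From mathcomp Require Import all_classical all_reals all_analysis.
From mathcomp Require Import ring lra.
Import Order.TTheory GRing.Theory Num.Theory.
Import numFieldNormedType.Exports.
Local Open Scope classical_set_scope.
Local Open Scope ring_scope.
Set Implicit Arguments. Unset Strict Implicit.

Section Dot.
Variables (R : realType) (d : nat).
Implicit Types (u v w : 'rV[R]_d).

Lemma dotpC u v : dotp u v = dotp v u.
Proof. by rewrite /dotp; apply: eq_bigr => i _; rewrite mulrC. Qed.
Lemma dotpDl u v w : dotp (u + v) w = dotp u w + dotp v w.
Proof. by rewrite /dotp -big_split; apply: eq_bigr => i _; rewrite mxE mulrDl. Qed.
Lemma dotpZl a u v : dotp (a *: u) v = a * dotp u v.
Proof. by rewrite /dotp mulr_sumr; apply: eq_bigr => i _; rewrite mxE mulrA. Qed.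
Lemma dotpNl u v : dotp (- u) v = - dotp u v.
Proof. by rewrite -scaleN1r dotpZl mulN1r. Qed.
Lemma dotpBl u v w : dotp (u - v) w = dotp u w - dotp v w.
Proof. by rewrite dotpDl dotpNl. Qed.
Lemma dotpDr u v w : dotp w (u + v) = dotp w u + dotp w v.
Proof. by rewrite dotpC dotpDl !(dotpC w). Qed.
Lemma dotpZr a u v : dotp v (a *: u) = a * dotp v u.
Proof. by rewrite dotpC dotpZl dotpC. Qed.
Lemma dotpNr u v : dotp v (- u) = - dotp v u.
Proof. by rewrite dotpC dotpNl dotpC. Qed.
Lemma dotpBr u v w : dotp w (u - v) = dotp w u - dotp w v.
Proof. by rewrite dotpDr dotpNr. Qed.
Lemma dotp0l v : dotp 0 v = 0.
Proof. by rewrite /dotp big1 // => i _; rewrite mxE mul0r. Qed.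
Lemma dotp0r v : dotp v 0 = 0.
Proof. by rewrite dotpC dotp0l. Qed.
Lemma sqnorm_ge0 u : 0 <= sqnorm u.
Proof. by rewrite /sqnorm /dotp sumr_ge0 // => i _; rewrite -expr2 sqr_ge0. Qed.
Lemma sqnormN u : sqnorm (- u) = sqnorm u.
Proof. by rewrite /sqnorm dotpNl dotpNr opprK. Qed.
Lemma sqnorm_eq0 u : sqnorm u = 0 -> u = 0.
Proof.
move=> h; apply/rowP => i; rewrite !mxE.
have H0 : forall j : 'I_d, true -> 0 <= u 0 j * u 0 j.
  by move=> j _; rewrite -expr2 sqr_ge0.
have /eqP := @psumr_eq0P _ _ _ _ H0 h i isT.
by rewrite mulf_eq0 orbb => /eqP.
Qed.

Lemma interp (h : 'rV[R]_d -> R) (gh : 'rV[R]_d -> 'rV[R]_d) (l : R) : 0 < l ->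
 (forall x y, h x <= h y + dotp (gh y) (x - y) + l / 2 * sqnorm (x - y)) ->
 (forall x y, h y + dotp (gh y) (x - y) <= h x) ->
 forall x y, h x + dotp (gh x) (y - x) + sqnorm (gh x - gh y) * l^-1 / 2 <= h y.
Proof.
move=> l0 sm cv x y.
set D := gh x - gh y.
set z := y + l^-1 *: D.
have h1 := sm z y; have h2 := cv z x.
have e1 : z - y = l^-1 *: D by rewrite /z addrC addKr.
have e2 : z - x = (y - x) + l^-1 *: D by rewrite /z addrAC.
rewrite e1 /sqnorm dotpZl dotpZr dotpZr in h1; rewrite e2 dotpDr dotpZr in h2.
have eD : dotp D D = dotp (gh x) D - dotp (gh y) D by rewrite {1}/D dotpBl.
have hl : l / 2 * (l^-1 * (l^-1 * dotp D D)) = l^-1 / 2 * dotp D D.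
  by field; rewrite lt0r_neq0.
rewrite hl in h1.
have key : l^-1 * dotp (gh x) D - l^-1 * dotp (gh y) D - l^-1 / 2 * dotp D D = dotp D D * l^-1 / 2.
  by rewrite eD; field; rewrite lt0r_neq0.
rewrite /sqnorm; lra.
Qed.

Lemma sqnormD u v : sqnorm (u + v) = sqnorm u + 2 * dotp u v + sqnorm v.
Proof. rewrite /sqnorm !dotpDl !dotpDr (dotpC v u); ring. Qed.

Lemma tilde_props (f : 'rV[R]_d -> R) (g : 'rV[R]_d -> 'rV[R]_d) (mu L : R) ws :
  (forall x y, f x <= f y + dotp (g y) (x - y) + L / 2 * sqnorm (x - y)) ->
  (forall x y, f y + dotp (g y) (x - y) + mu / 2 * sqnorm (x - y) <= f x) ->
  let ft := fun x => f x - mu / 2 * sqnorm (x - ws) in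
  let ght := fun x => g x - mu *: (x - ws) in
  (forall x y, ft x <= ft y + dotp (ght y) (x - y) + (L - mu) / 2 * sqnorm (x - y)) /\
  (forall x y, ft y + dotp (ght y) (x - y) <= ft x).
Proof.
move=> h1 h2 ft ght.
have E : forall x y, ft x = ft y + dotp (ght y) (x - y)
   + (f x - f y - dotp (g y) (x - y) - mu / 2 * sqnorm (x - y)).
  move=> x y; rewrite /ft /ght.
  have -> : x - ws = (x - y) + (y - ws) by rewrite addrA subrK.
  rewrite sqnormD (dotpBl (g y)) dotpZl (dotpC (y - ws)); by field.
split.
  move=> x y; rewrite (E x y); have := h1 x y; lra.
move=> x y; rewrite (E x y); have := h2 x y; have := sqnorm_ge0 (x - y); lra.
Qed.

Lemma grad0 (f : 'rV[R]_d -> R) (g : 'rV[R]_d -> 'rV[R]_d) (L : R) ws :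
  0 < L ->
  (forall x y, f x <= f y + dotp (g y) (x - y) + L / 2 * sqnorm (x - y)) ->
  (forall x, f ws <= f x) -> g ws = 0.
Proof.
move=> L0 h1 hmin.
have := h1 (ws - L^-1 *: g ws) ws.
have := hmin (ws - L^-1 *: g ws).
have e : ws - L^-1 *: g ws - ws = - (L^-1 *: g ws) by rewrite addrAC subrr add0r.
have eq1 : dotp (g ws) (- (L^-1 *: g ws)) = - (L^-1 * dotp (g ws) (g ws)).
  by rewrite dotpNr dotpZr.
have eq2 : dotp (- (L^-1 *: g ws)) (- (L^-1 *: g ws)) = L^-1 * (L^-1 * dotp (g ws) (g ws)).
  by rewrite dotpNl dotpNr opprK dotpZl dotpZr.
rewrite e /sqnorm eq1 eq2 => ha hb.
have key : L / 2 * (L^-1 * (L^-1 * dotp (g ws) (g ws))) = L^-1 / 2 * dotp (g ws) (g ws).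
  by field; rewrite lt0r_neq0.
rewrite key in hb.
have hn := sqnorm_ge0 (g ws); rewrite /sqnorm in hn.
have : L^-1 / 2 * dotp (g ws) (g ws) <= 0.
  have e2 : - (L^-1 * dotp (g ws) (g ws)) = - 2 * (L^-1 / 2 * dotp (g ws) (g ws)).
    by field; rewrite lt0r_neq0.
  move: hb; rewrite e2; lra.
rewrite pmulr_rle0 => [hle|]; last by rewrite divr_gt0 // invr_gt0.
by apply: sqnorm_eq0; apply/eqP; rewrite eq_le hle hn.
Qed.
End Dot.

Section Main.
Variables (R : realType) (N d : nat) (mu L : R) (alpha : nat -> nat -> R).
Variables (g : 'rV[R]_d -> 'rV[R]_d) (ws : 'rV[R]_d) (w : nat -> 'rV[R]_d).

Definition gt i := g (w i) - mu *: (w i - ws).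
Definition pv j := if j is j'.+1 then gt j' else w 0%N - ws.
Definition Pm : 'M[R]_(N.+1, d) := \matrix_(j, c) pv j 0 c.
Definition T (u : 'cV[R]_N.+1) : 'rV[R]_d := u^T *m Pm.
Definition Q (A : 'M[R]_N.+1) : R :=
  \sum_(c < d) ((col c Pm)^T *m A *m col c Pm) 0 0.

Lemma sum_ev n j (F : 'I_n -> R) (hj : (j < n)%N) :
  \sum_(k < n) ev R n j k 0 * F k = F (Ordinal hj).
Proof.
rewrite (bigD1 (Ordinal hj)) //= big1.
  by rewrite !mxE /= eqxx mul1r addr0.
move=> k hk; rewrite !mxE.
case: eqP => [e|_]; last by rewrite mul0r.
by move: hk; rewrite -val_eqE /= e eqxx.
Qed.

Lemma T_ev j : (j < N.+1)%N -> T (ev R N.+1 j) = pv j.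
Proof.
move=> hj; apply/rowP => c; rewrite !mxE.
rewrite (eq_bigr (fun k => ev R N.+1 j k 0 * Pm k c)); last by move=> k _; rewrite mxE.
by rewrite (sum_ev (fun k => Pm k c) hj) mxE.
Qed.

Lemma TD u v : T (u + v) = T u + T v.
Proof. by rewrite /T linearD /= mulmxDl. Qed.
Lemma TN u : T (- u) = - T u.
Proof. by rewrite /T linearN /= mulNmx. Qed.
Lemma TB u v : T (u - v) = T u - T v.
Proof. by rewrite TD TN. Qed.
Lemma TZ a u : T (a *: u) = a *: T u.
Proof. by rewrite /T linearZ /= scalemxAl. Qed.
Lemma T0 : T 0 = 0.
Proof. by rewrite /T linear0 mul0mx. Qed.
Lemma Tsum n (F : 'I_n -> 'cV[R]_N.+1) : T (\sum_(i < n) F i) = \sum_(i < n) T (F i).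
Proof. exact: (big_morph T TD T0). Qed.

Lemma QD A B : Q (A + B) = Q A + Q B.
Proof. by rewrite /Q -big_split; apply: eq_bigr => c _; rewrite mulmxDr mulmxDl mxE. Qed.
Lemma QZ a A : Q (a *: A) = a * Q A.
Proof. by rewrite /Q mulr_sumr; apply: eq_bigr => c _; rewrite -scalemxAr -scalemxAl mxE. Qed.
Lemma QN A : Q (- A) = - Q A.
Proof. by rewrite -scaleN1r QZ mulN1r. Qed.
Lemma Q0 : Q 0 = 0.
Proof. by rewrite /Q big1 // => c _; rewrite mulmx0 mul0mx mxE. Qed.
Lemma Qsum n (F : 'I_n -> 'M[R]_N.+1) : Q (\sum_(i < n) F i) = \sum_(i < n) Q (F i).
Proof. exact: (big_morph Q QD Q0). Qed.
Lemma Qouter u v : Q (outer u v) = dotp (T u) (T v).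
Proof.
rewrite /Q /dotp; apply: eq_bigr => c _.
rewrite /outer mulmxA -[_ *m col c Pm]mulmxA mxE big_ord1 !mxE.
congr (_ * _); apply: eq_bigr => j _; rewrite !mxE; first exact: mulrC. done.
Qed.

Hypothesis N0 : (0 < N)%N.
Hypothesis Hw : forall k, (1 <= k <= N)%N ->
     w k - ws = (1 - mu / L * \sum_(i < k) alpha k i) *: (w 0%N - ws)
                - \sum_(i < k) (alpha k i / L) *: (g (w i) - mu *: (w i - ws)).

Lemma T_bw0 : T (bw0 R N) = w 0%N - ws.
Proof. by rewrite /bw0 T_ev. Qed.
Lemma T_bg i : (i < N)%N -> T (bg R N i) = gt i.
Proof. by move=> hi; rewrite /bg T_ev. Qed.
Lemma T_bw k : (k <= N)%N -> T (bw N mu L alpha k) = w k - ws.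
Proof.
move=> hk; rewrite /bw TB TZ Tsum T_bw0.
rewrite (eq_bigr (fun i : 'I_k => (alpha k i / L) *: gt i)); last first.
  by move=> i _; rewrite TZ T_bg // (leq_trans (ltn_ord i) hk).
case: k hk => [|k] hk.
  by rewrite !big_ord0 mulr0 !subr0 scale1r.
by rewrite [RHS]Hw.
Qed.

Variable ft : 'rV[R]_d -> R.
Hypothesis Hint : forall x y, ft x + dotp (g x - mu *: (x - ws)) (y - x)
  + sqnorm ((g x - mu *: (x - ws)) - (g y - mu *: (y - ws))) * (L - mu)^-1 / 2 <= ft y.
Hypothesis Hg0 : g ws = 0.
Hypothesis muL : mu < L.

Let F i := ft (w i) - ft ws.

Lemma I1 i : F i - dotp (gt i) (w i - ws) + sqnorm (gt i) * (L - mu)^-1 / 2 <= 0.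
Proof.
have := Hint (w i) ws.
rewrite Hg0 subrr scaler0 subr0 subr0 -[ws - w i]opprB dotpNr /F -/(gt i); lra.
Qed.

Lemma I2 i : F i.+1 + dotp (gt i.+1) ((w i - ws) - (w i.+1 - ws))
   + sqnorm (gt i - gt i.+1) * (L - mu)^-1 / 2 <= F i.
Proof.
have := Hint (w i.+1) (w i).
have -> : (w i - ws) - (w i.+1 - ws) = w i - w i.+1 by rewrite opprB addrA subrK.
rewrite -/(gt i) -/(gt i.+1) -sqnormN opprB /F; lra.
Qed.

Lemma I3 : sqnorm (gt N.-1) * (L - mu)^-1 / 2 <= F N.-1.
Proof.
have := Hint ws (w N.-1).
rewrite Hg0 subrr scaler0 subr0 dotp0l sub0r sqnormN -/(gt N.-1) /F; lra.
Qed.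

Lemma entryB m n (A B : 'M[R]_(m, n)) i j : (A - B) i j = A i j - B i j.
Proof. by rewrite !mxE. Qed.
Lemma entryZ m n a (A : 'M[R]_(m, n)) i j : (a *: A) i j = a * A i j.
Proof. by rewrite !mxE. Qed.

Lemma phi_ev (Fr : 'rV[R]_N) i (hi : (i < N)%N) : (Fr *m bf R N i) 0 0 = Fr 0 (Ordinal hi).
Proof.
rewrite mxE (eq_bigr (fun k => ev R N i k 0 * Fr 0 k)); last by move=> k _; rewrite mulrC.
exact: (sum_ev (fun k => Fr 0 k) hi).
Qed.

Lemma main_bound tau : UB_feasible N mu L alpha tau ->
  sqnorm (w N - ws) <= tau * sqnorm (w 0%N - ws).
Proof.
case=> lnext [lstar [llast [hnext [hstar [hlast [hpsd hcon]]]]]].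
have HQ : 0 <= Q (Smat N mu L alpha tau lnext lstar llast).
  by rewrite /Q sumr_ge0 // => c _; apply: hpsd.
rewrite /Smat /= !QD QN !QZ !Qouter !Qsum T_bw0 T_bw // T_bg ?prednK // in HQ.
have HS1 : \sum_(i < N) Q ((lstar i / 2) *:
          (- outer (bg R N i) (bw N mu L alpha i) -
           outer (bw N mu L alpha i) (bg R N i) +
           (L - mu)^-1 *: outer (bg R N i) (bg R N i)))
   <= \sum_(i < N) lstar i * (- F i).
  apply: ler_sum => i _.
  have hi : (i <= N)%N := ltnW (ltn_ord i).
  rewrite QZ !QD !QN QZ !Qouter T_bg // T_bw // (dotpC (w i - ws) (gt i)).
  have := I1 i; have := hstar i (ltn_ord i).
  have -> : lstar i / 2 * (- dotp (gt i) (w i - ws) - dotp (gt i) (w i - ws)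
      + (L - mu)^-1 * dotp (gt i) (gt i))
    = lstar i * (- dotp (gt i) (w i - ws) + sqnorm (gt i) * (L - mu)^-1 / 2).
    by rewrite /sqnorm; field; rewrite subr_eq0 gt_eqF.
  move=> h0 h1; apply: ler_wpM2l => //; lra.
have HS2 : \sum_(i < N.-1) Q ((lnext i / 2) *:
          (outer (bg R N i.+1)
             (bw N mu L alpha i - bw N mu L alpha i.+1) +
           outer (bw N mu L alpha i - bw N mu L alpha i.+1) (bg R N i.+1) +
           (L - mu)^-1 *: outer (bg R N i - bg R N i.+1) (bg R N i - bg R N i.+1)))
   <= \sum_(i < N.-1) lnext i * (F i - F i.+1).
  apply: ler_sum => i _.
  have hi1 : (i.+1 < N)%N by rewrite -ltn_predRL.
  have hi2 : (i < N)%N := ltnW hi1.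
  have hi3 : (i <= N)%N := ltnW hi2.
  have hi4 : (i.+1 <= N)%N := ltnW hi1.
  rewrite QZ !QD QZ !Qouter (TB (bw N mu L alpha i)) (TB (bg R N i)).
  rewrite T_bg // T_bg // T_bw // T_bw //.
  rewrite (dotpC (w i - ws - (w i.+1 - ws))).
  have := I2 i; have := hnext i (ltn_ord i).
  set D := dotp (gt i.+1) (w i - ws - (w i.+1 - ws)).
  have -> : lnext i / 2 * (D + D + (L - mu)^-1 * dotp (gt i - gt i.+1) (gt i - gt i.+1))
    = lnext i * (D + sqnorm (gt i - gt i.+1) * (L - mu)^-1 / 2).
    by rewrite /sqnorm; field; rewrite subr_eq0 gt_eqF.
  move=> h0 h1; apply: ler_wpM2l => //; lra.
have H3 : llast / (2 * (L - mu)) * dotp (gt N.-1) (gt N.-1) <= llast * F N.-1.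
  have -> : llast / (2 * (L - mu)) * dotp (gt N.-1) (gt N.-1)
     = llast * (sqnorm (gt N.-1) * (L - mu)^-1 / 2).
    by rewrite /sqnorm; field; rewrite subr_eq0 gt_eqF.
  by apply: ler_wpM2l => //; apply: I3.
set Frow : 'rV[R]_N := \row_(j < N) F j.
have hc := congr1 (fun v => (Frow *m v) 0 0) hcon.
have c1 : (Frow *m \sum_(i < N.-1) lnext i *: (bf R N i.+1 - bf R N i)) 0 0
    = \sum_(i < N.-1) lnext i * (F i.+1 - F i).
  rewrite mulmx_sumr summxE; apply: eq_bigr => i _.
  have hi1 : (i.+1 < N)%N by rewrite -ltn_predRL.
  by rewrite -scalemxAr entryZ mulmxBr entryB (phi_ev _ hi1) (phi_ev _ (ltnW hi1)) !mxE.
have c2 : (Frow *m \sum_(i < N) lstar i *: bf R N i) 0 0 = \sum_(i < N) lstar i * F i.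
  rewrite mulmx_sumr summxE; apply: eq_bigr => i _.
  by rewrite -scalemxAr entryZ (phi_ev _ (ltn_ord i)) !mxE.
have c3 : (Frow *m (llast *: bf R N N.-1)) 0 0 = llast * F N.-1.
  have hN : (N.-1 < N)%N by rewrite prednK.
  by rewrite -scalemxAr entryZ (phi_ev _ hN) !mxE.
rewrite /= mulmxBr mulmxDr entryB mxE c1 c2 c3 mulmx0 mxE in hc.
have c4 : \sum_(i < N.-1) lnext i * (F i - F i.+1) = - \sum_(i < N.-1) lnext i * (F i.+1 - F i).
  by rewrite -sumrN; apply: eq_bigr => i _; ring.
have c5 : \sum_(i < N) lstar i * (- F i) = - \sum_(i < N) lstar i * F i.
  by rewrite -sumrN; apply: eq_bigr => i _; ring.
clear c1 c2 c3 hcon hpsd.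
move: HQ HS1 HS2 H3 hc c4 c5.
set A1 := \sum_(i < N) Q _.
set A2 := \sum_(i < N.-1) Q _.
set B1 := \sum_(i < N) lstar i * - F i.
set B2 := \sum_(i < N) lstar i * F i.
set C1 := \sum_(i < N.-1) lnext i * (F i - F i.+1).
set C2 := \sum_(i < N.-1) lnext i * (F i.+1 - F i).
set X := llast / (2 * (L - mu)) * dotp (gt N.-1) (gt N.-1).
set Y := llast * F N.-1.
rewrite /sqnorm.
set Z0 := dotp (w 0%N - ws) (w 0%N - ws).
set ZN := dotp (w N - ws) (w N - ws).
set tZ := tau * Z0.
move=> *; lra.
Qed.
End Main.

Unset Implicit Arguments. Set Strict Implicit.

Theorem lemma5 (R : realType) (N : nat) (mu L : R) (alpha : nat -> nat -> R) :
  (0 < N)%N -> 0 <= mu -> mu < L ->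
  forall (d : nat) (f : 'rV[R]_d -> R) (g : 'rV[R]_d -> 'rV[R]_d)
         (ws : 'rV[R]_d) (w : nat -> 'rV[R]_d),
  in_FmuL mu L f g ->
  (forall x, f ws <= f x) ->
  (forall k, (1 <= k <= N)%N ->
     w k - ws = (1 - mu / L * \sum_(i < k) alpha k i) *: (w 0%N - ws)
                - \sum_(i < k) (alpha k i / L) *: (g (w i) - mu *: (w i - ws))) ->
  ((sqnorm (w N - ws))%:E <= UB N mu L alpha * (sqnorm (w 0%N - ws))%:E)%E.
Proof.
move=> N0 mu0 muL d f g ws w [_ [Hup Hlo]] Hmin Hw.
have L0 : 0 < L by apply: le_lt_trans mu0 muL.
have Hg0 := grad0 L0 Hup Hmin.
have [Hsm Hcv] := tilde_props ws Hup Hlo.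
have lm0 : 0 < L - mu by rewrite subr_gt0.
have HI := interp lm0 Hsm Hcv.
have MB := main_bound N0 Hw HI Hg0 muL.
have [X0|X0] := eqVneq (sqnorm (w 0%N - ws)) 0.
  have e0z := sqnorm_eq0 X0.
  have allz : forall n k, (k <= n)%N -> (k <= N)%N -> w k - ws = 0.
    elim=> [|n IH] k hkn hkN.
      by move: hkn; rewrite leqn0 => /eqP ->.
    case: k hkn hkN => [|k] hkn hkN; first exact: e0z.
    rewrite Hw ?hkN // e0z scaler0 sub0r big1 ?oppr0 // => i _.
    have hi : (i <= n)%N by rewrite -ltnS (leq_trans (ltn_ord i) hkn).
    have hi' : (i <= N)%N by rewrite (leq_trans (ltnW (ltn_ord i)) hkN).
    have wi : w i = ws by apply/eqP; rewrite -subr_eq0 IH.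
    by rewrite wi Hg0 subrr scaler0 subr0 scaler0.
  by rewrite X0 mule0 (allz N N) // /sqnorm dotp0l.
have x0p : 0 < sqnorm (w 0%N - ws).
  by rewrite lt_def X0 sqnorm_ge0.
have hb : ((sqnorm (w N - ws) / sqnorm (w 0%N - ws))%:E <= UB N mu L alpha)%E.
  apply/ereal_infP => y [t ht <-].
  by rewrite lee_fin ler_pdivrMr // MB.
have := lee_wpmul2r (x := (sqnorm (w 0%N - ws))%:E) _ hb.
rewrite -EFinM divfK ?X0 //; apply.
by rewrite lee_fin sqnorm_ge0.
Qed.
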